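(* Let $X$ be a finite set, $k$ an integer with $1\le k\le|X|-1$, $\mathfrak{C}$ a nonempty symmetric family of choice functions for $\binom{X}{k}$, and $\mathcal{F}$ the set of (not necessarily simple) averaging functions for $\mathfrak{C}$. Suppose that for some $r\in\{3,\dots,k\}$ the following holds: for every $Y\in\binom{X}{k}$ and every one-to-one $\bar a\in Y^r$ there is $f\in\mathcal{F}_{[r]}$ with $f_Y(\bar a)=a_2$ and $f_Z(\bar b)=b_1$ for every $Z\in\binom{X}{k}$ with $Z\ne Y$ and every $\bar b\in Z^r$. Then $\mathfrak{C}$ is full, i.e. every choice function for $\binom{X}{k}$ belongs to $\mathfrak{C}$.
   Context: $\binom{X}{k}=\{Y\subseteq X:|Y|=k\}$; choice functions satisfy $c(Y)\in Y$. Symmetric: for every permutation $\pi$ of $X$ and $c\in\mathfrak{C}$, $(\pi*c)(Y)=\pi^{-1}(c(\pi(Y)))$ is in $\mathfrak{C}$. $\mathcal{F}_{[r]}$ is the set of families $f=\langle f_Y:Y\in\binom{X}{k}\rangle$ with $f_Y:Y^r\to Y$, $f_Y(x_1,\dots,x_r)\in\{x_1,\dots,x_r\}$, such that for all $c_1,\dots,c_r\in\mathfrak{C}$ the function $Y\mapsto f_Y(c_1(Y),\dots,c_r(Y))$ is in $\mathfrak{C}$. Standing assumption: every $f\in\mathcal{F}$ that is simple (i.e. $f_Y$ is the restriction to $Y^r$ of a single function independent of $Y$) is a monarchy (for some $t$, $f_Y(\bar x)=x_t$ for all $Y,\bar x$). *)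

(* Defs.v *)
From HB Require Import structures.
From mathcomp Require Import all_boot all_fingroup.
Set Implicit Arguments. Unset Strict Implicit. Unset Printing Implicit Defensive.
Import GroupScope.

Section Defs.
Variables (X : finType) (k : nat).

Definition ksub := {Y : {set X} | #|Y| == k}.

Definition is_choice (c : {ffun ksub -> X}) : Prop := forall Y : ksub, c Y \in val Y.

Lemma pimg_card (p : {perm X}) (Y : ksub) : #|p @: val Y| == k.
Proof. by rewrite card_imset ?(valP Y) //; exact: perm_inj. Qed.

Definition pimg (p : {perm X}) (Y : ksub) : ksub := exist _ (p @: val Y) (pimg_card p Y).

Definition pact (p : {perm X}) (c : {ffun ksub -> X}) : {ffun ksub -> X} :=
  [ffun Y => (p^-1) (c (pimg p Y))].

Definition symmetric_family (C : {set {ffun ksub -> X}}) : Prop :=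
  forall (p : {perm X}) c, c \in C -> pact p c \in C.

Definition in_pow (n : nat) (Y : ksub) (xs : n.-tuple X) : Prop :=
  forall i : 'I_n, tnth xs i \in val Y.

(* f in F_[n]: f = <f_Y : Y in binom(X,k)>, f_Y : Y^n -> Y (only values on Y^n matter) *)
Definition averaging (C : {set {ffun ksub -> X}}) (n : nat)
    (f : ksub -> n.-tuple X -> X) : Prop :=
  (forall Y xs, in_pow Y xs -> f Y xs \in (xs : seq X)) /\
  (forall cs : 'I_n -> {ffun ksub -> X}, (forall i, cs i \in C) ->
     [ffun Y => f Y [tuple cs i Y | i < n]] \in C).

Definition simple (n : nat) (f : ksub -> n.-tuple X -> X) : Prop :=
  exists g : n.-tuple X -> X, forall Y xs, in_pow Y xs -> f Y xs = g xs.

Definition monarchy (n : nat) (f : ksub -> n.-tuple X -> X) : Prop :=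
  exists t : 'I_n, forall Y xs, in_pow Y xs -> f Y xs = tnth xs t.

Definition full (C : {set {ffun ksub -> X}}) : Prop :=
  forall c, is_choice c -> c \in C.

End Defs.

(* Main.v *)
Require Import Defs.
From mathcomp Require Import all_boot all_fingroup.
From mathcomp Require Import zify.
Set Implicit Arguments. Unset Strict Implicit. Unset Printing Implicit Defensive.

Section Aux.
Variables (X : finType) (k : nat).

Lemma tperm_fixY (Y : ksub X k) (a b : X) :
  a \in val Y -> b \in val Y -> pimg (tperm a b) Y = Y.
Proof.
move=> aY bY; apply: val_inj => /=.
apply/eqP; rewrite eqEcard card_imset; last exact: perm_inj.
rewrite leqnn andbT; apply/subsetP => z /imsetP [y yY ->].
by case: tpermP => // ->.
Qed.

End Aux.

Theorem claim14p4 (X : finType) (k : nat) (C : {set {ffun ksub X k -> X}})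
  (hk1 : 1 <= k) (hkX : k <= #|X| - 1)
  (hCchoice : forall c, c \in C -> is_choice c)
  (hCne : exists c, c \in C)
  (hCsym : symmetric_family C)
  (hstand : forall (n : nat) (f : ksub X k -> n.-tuple X -> X),
      averaging C f -> simple f -> monarchy f)
  (r : nat) (hr3 : 3 <= r) (hrk : r <= k)
  (hyp : forall (Y : ksub X k) (a : r.-tuple X), in_pow Y a -> uniq a ->
      exists f : ksub X k -> r.-tuple X -> X,
        averaging C f /\
        (forall i : 'I_r, val i = 1 -> f Y a = tnth a i) /\
        (forall Z : ksub X k, Z <> Y -> forall b : r.-tuple X, in_pow Z b ->
           forall i : 'I_r, val i = 0 -> f Z b = tnth b i)) :
  full C.
Proof.
have upd : forall (c : {ffun ksub X k -> X}) (Y : ksub X k) (x : X), c \in C -> x \in val Y ->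
    [ffun Z : ksub X k => if Z == Y then x else c Z] \in C.
  move=> c Y x cC xY.
  have cYY : c Y \in val Y := hCchoice c cC Y.
  have [ex|nex] := eqVneq x (c Y).
    suff -> : [ffun Z : ksub X k => if Z == Y then x else c Z] = c by [].
    by apply/ffunP => Z; rewrite ffunE; case: eqP => // ->.
  pose y0 := c Y.
  pose s := y0 :: x :: enum (val Y :\ y0 :\ x).
  have sY : forall z, z \in s -> z \in val Y.
    move=> z; rewrite !inE mem_enum !inE.
    by case/or3P => [/eqP->|/eqP->|/and3P[]].
  have us : uniq s.
    rewrite /= !inE mem_enum !inE eq_sym nex /= mem_enum !inE eqxx /= enum_uniq.
    by rewrite /y0 (negPf nex) eqxx.


  have ss : size s = k.
    rewrite /= -cardE.
    have hY : #|val Y| = k := eqP (valP Y).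
    have e1 := cardsD1 y0 (val Y); rewrite cYY in e1.
    have e2 := cardsD1 x (val Y :\ y0); rewrite !inE nex xY /= in e2.
    move: hY e1 e2; set m1 := #|val Y|; set m2 := #|val Y :\ y0|; set m3 := #|_ :\ x|; simpl; lia.
  pose a := [tuple nth y0 s i | i < r].
  have ta : forall i : 'I_r, tnth a i = nth y0 s i by move=> i; rewrite tnth_mktuple.
  have aY : in_pow Y a.
    move=> i; rewrite ta; apply: sY; apply: mem_nth; rewrite ss.
    exact: leq_trans (ltn_ord i) hrk.
  have ua : uniq a.
    rewrite map_inj_uniq ?enum_uniq // => i j /eqP.
    rewrite nth_uniq // ?ss; last 2 first.
    - exact: leq_trans (ltn_ord i) hrk.
    - exact: leq_trans (ltn_ord j) hrk.
    by move/eqP/val_inj.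
  have [f [[_ favg] [fY fZ]]] := hyp Y a aY ua.
  pose cs := fun i : 'I_r => if val i == 0 then c else pact (tperm y0 (tnth a i)) c.
  have csC : forall i, cs i \in C.
    by move=> i; rewrite /cs; case: eqP => _ //; exact: hCsym.
  have H := favg cs csC.
  suff -> : [ffun Z : ksub X k => if Z == Y then x else c Z] =
            [ffun Z => f Z [tuple cs i Z | i < r]] by [].
  have r1 : 1 < r by apply: leq_trans hr3.
  have r0 : 0 < r by apply: ltnW.
  apply/ffunP => Z; rewrite !ffunE; case: eqP => [->|/eqP nZ].
    have -> : [tuple cs i Y | i < r] = a.
      apply: eq_from_tnth => i; rewrite tnth_mktuple /cs.
      case: eqP => [i0|_].
        by rewrite ta i0.
      rewrite ffunE tperm_fixY ?(aY i) //.
      by rewrite tpermV /y0 tpermL.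
    by rewrite (fY (Ordinal r1)) // ta.
  have nZ' : Z <> Y by move=> e; rewrite e eqxx in nZ.
  rewrite (fZ Z nZ' _ _ (Ordinal r0)) //.
    by rewrite tnth_mktuple.
  by move=> i; rewrite tnth_mktuple; apply: hCchoice.
case: hCne => c0 c0C d dch.
suff : forall n c, c \in C -> #|[set Y | c Y != d Y]| <= n -> d \in C.
  by move/(_ _ c0 c0C (leqnn _)).
elim=> [|n IH] c cC.
  rewrite leqn0 cards_eq0 => /eqP e.
  suff -> : d = c by [].
  apply/ffunP => Y; apply/eqP; rewrite eq_sym; apply: contraT => ne.
  by have := in_set0 Y; rewrite -e inE ne.
move=> hn.
have [Y YD|] := pickP (mem [set Y | c Y != d Y]); last first.
  move=> e; apply: (IH c cC); rewrite (eq_card0 e) //.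
apply: (IH [ffun Z : ksub X k => if Z == Y then d Y else c Z]).
  exact: upd.
rewrite -ltnS; apply: leq_trans hn; apply: proper_card.
rewrite properEneq; apply/andP; split.
  apply/eqP => e; move: YD; rewrite -e !inE ffunE eqxx eqxx //.
apply/subsetP => Z; rewrite !inE ffunE; case: (eqVneq Z Y) => [->|//].
by rewrite eqxx.
Qed.
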